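(* Let $M$ be an enveloping matroid for a delta-matroid $D$ on $[n,\overline{n}]$, and let $S\in\operatorname{AdS}_n$. Then $S$ is independent in $M$ if and only if $S$ is independent in $D$.
   Context: Let $[n,\overline{n}]=\{1,\dots,n,\overline{1},\dots,\overline{n}\}$ with involution $a\mapsto\overline{a}$; $\overline{S}=\{\overline{a}:a\in S\}$. A subset is admissible if it contains at most one of $i,\overline{i}$ for each $i$; $\operatorname{AdS}_n$ is the set of admissible subsets. In $\mathbb{R}^n$ set $e_{\overline{i}}=-e_i$, $e_S=\sum_{a\in S}e_a$. A delta-matroid $D$ on $[n,\overline{n}]$ is a nonempty collection $\mathcal{F}$ of admissible sets of size $n$ (feasible sets) such that $P(D)=\operatorname{Conv}\{e_B:B\in\mathcal{F}\}$ has all edges parallel to some $e_i$ or $e_i\pm e_j$. An admissible $S$ is independent in $D$ if it is contained in a feasible set (equivalently $\max_{B\in\mathcal{F}}(|S\cap B|-|\overline{S}\cap B|)=|S|$). For $S\subseteq[n,\overline{n}]$ let $u_S\in\mathbb{R}^{[n,\overline{n}]}$ be its indicator vector; for a matroid $M$ on the $2n$-element ground set $[n,\overline{n}]$ let $P(M)=\operatorname{Conv}\{u_B:B\text{ a basis of }M\}$. Let $\operatorname{env}\colon\mathbb{R}^{[n,\overline{n}]}\to\mathbb{R}^n$, $(x_1,\dots,x_n,x_{\overline{1}},\dots,x_{\overline{n}})\mapsto(x_1-x_{\overline{1}},\dots,x_n-x_{\overline{n}})$. $M$ is an enveloping matroid for $D$ if $\operatorname{env}(P(M))=P(D)$. 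*)

(* Defs.v *)
From HB Require Import structures.
From mathcomp Require Import all_boot all_order all_algebra.
From mathcomp Require Import reals.
Set Implicit Arguments. Unset Strict Implicit. Unset Printing Implicit Defensive.
Import Order.TTheory GRing.Theory Num.Theory.
Local Open Scope ring_scope.

(* The ground set [n, nbar]: inl i stands for i, inr i stands for \bar i. *)
Definition gset (n : nat) : finType := ('I_n + 'I_n)%type.

Definition bar (n : nat) (a : gset n) : gset n :=
  match a with inl i => inr i | inr i => inl i end.

Definition admissible (n : nat) (S : {set gset n}) : Prop :=
  forall i : 'I_n, ~~ ((inl i \in S) && (inr i \in S)).

Section Geometry.
Variable R : realType.

Definition evec (n : nat) (i : 'I_n) : 'I_n -> R :=
  fun k => (k == i)%:R.

Definition eS (n : nat) (S : {set gset n}) : 'I_n -> R :=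
  fun k => \sum_(a in S) match a with
                         | inl i => evec i k
                         | inr i => - evec i k end.

Definition uS (n : nat) (S : {set gset n}) : gset n -> R :=
  fun a => (a \in S)%:R.

Definition env (n : nat) (x : gset n -> R) : 'I_n -> R :=
  fun i => x (inl i) - x (inr i).

Definition dot (K : finType) (c x : K -> R) : R := \sum_(k : K) c k * x k.

Definition conv (K A : finType) (F : {set A}) (p : A -> K -> R) (x : K -> R) : Prop :=
  exists l : A -> R,
    [/\ forall a, 0 <= l a,
        \sum_(a in F) l a = 1
      & forall k, x k = \sum_(a in F) l a * p a k].

(* [u, v] (u <> v, both among the generating points) is an edge of
   Conv{p b : b in F}: some linear functional c attains its maximum over
   the polytope exactly on a face contained in the line through u and v. *)
Definition is_edge (K A : finType) (F : {set A}) (p : A -> K -> R)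
    (u v : K -> R) : Prop :=
  [/\ exists2 b, b \in F & (forall k, p b k = u k),
      exists2 b, b \in F & (forall k, p b k = v k),
      exists k, u k != v k &
      exists c : K -> R,
        dot c u = dot c v /\
        forall b, b \in F ->
          dot c (p b) <= dot c u /\
          (dot c (p b) = dot c u ->
             exists t : R, forall k, p b k = u k + t * (v k - u k))].

Definition good_direction (n : nat) (w : 'I_n -> R) : Prop :=
  exists t : R, t != 0 /\ exists i : 'I_n,
    (forall k, w k = t * evec i k) \/
    exists j : 'I_n, j != i /\
      ((forall k, w k = t * (evec i k + evec j k)) \/
       (forall k, w k = t * (evec i k - evec j k))).

Definition PD (n : nat) (F : {set {set gset n}}) : ('I_n -> R) -> Prop :=
  conv F (@eS n).

Definition is_delta_matroid (n : nat) (F : {set {set gset n}}) : Prop :=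
  [/\ F != set0,
      (forall B, B \in F -> admissible B /\ #|B| = n)
    & forall u v, is_edge F (@eS n) u v ->
        good_direction (fun k => v k - u k)].

Definition PM (n : nat) (Bs : {set {set gset n}}) : (gset n -> R) -> Prop :=
  conv Bs (@uS n).

Definition enveloping (n : nat) (Bs F : {set {set gset n}}) : Prop :=
  forall y : 'I_n -> R,
    (exists x, PM Bs x /\ forall i, y i = env x i) <-> PD F y.

End Geometry.

Definition is_matroid (T : finType) (Bs : {set {set T}}) : Prop :=
  Bs != set0 /\
  forall B1 B2, B1 \in Bs -> B2 \in Bs ->
    forall x, x \in B1 :\: B2 ->
      exists2 y, y \in B2 :\: B1 & (y |: (B1 :\ x)) \in Bs.

Definition indep_matroid (T : finType) (Bs : {set {set T}}) (S : {set T}) : Prop :=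
  exists2 B, B \in Bs & S \subset B.

Definition indep_delta (n : nat) (F : {set {set gset n}}) (S : {set gset n}) : Prop :=
  admissible S /\ exists2 B, B \in F & S \subset B.

(* Main.v *)
Require Import Defs.
From mathcomp Require Import all_boot all_order all_algebra.
From mathcomp Require Import reals ring lra zify.
Set Implicit Arguments. Unset Strict Implicit. Unset Printing Implicit Defensive.
Import Order.TTheory GRing.Theory Num.Theory.
Local Open Scope ring_scope.

Section H.
Variable R : realType.

Lemma conv_max (K A : finType) (F : {set A}) (p : A -> K -> R) x (c : K -> R) :
  conv F p x -> exists2 a, a \in F & dot c x <= dot c (p a).
Proof.
case=> l [l0 l1 lx].
have ex : dot c x = \sum_(a in F) l a * dot c (p a).
  rewrite /dot.
  under eq_bigr => k _ do rewrite lx mulr_sumr.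
  rewrite exchange_big /=; apply: eq_bigr => a _.
  rewrite mulr_sumr; apply: eq_bigr => k _; ring.
case: (boolP [exists a in F, dot c x <= dot c (p a)]) => [/exists_inP//|/exists_inPn H].
have lt : forall a, a \in F -> 0 < dot c x - dot c (p a).
  by move=> a aF; rewrite subr_gt0 ltNge H.
set s := dot c x.
have e0 : \sum_(a in F) l a * (s - dot c (p a)) = 0.
  under eq_bigr => a _ do rewrite mulrBr.
  by rewrite sumrB -mulr_suml l1 mul1r -ex subrr.
have z := psumr_eq0P (fun a aF => mulr_ge0 (l0 a) (ltW (lt a aF)))  e0.
have : \sum_(a in F) l a = 0.
  apply: big1 => a aF; have := z a aF; move/eqP; rewrite mulf_eq0.
  by case/orP => [/eqP //|]; rewrite (gt_eqF (lt a aF)).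
by rewrite l1 => /eqP; rewrite oner_eq0.
Qed.

Lemma conv_pt (K A : finType) (F : {set A}) (p : A -> K -> R) a :
  a \in F -> conv F p (p a).
Proof.
move=> aF; exists (fun b => (b == a)%:R); split.
- by move=> b; rewrite ler0n.
- by rewrite (bigD1 a) //= eqxx big1 ?addr0 // => b /andP[_ /negbTE ->].
- move=> k; rewrite (bigD1 a) //= eqxx mul1r big1 ?addr0 // => b /andP[_ /negbTE ->].
  by rewrite mul0r.
Qed.

Definition wT n (T : {set gset n}) (a : gset n) : R :=
  (a \in T)%:R - (bar a \in T)%:R.

Lemma eS_env n (X : {set gset n}) k : eS R X k = env (uS R X) k.
Proof.
rewrite /eS /env /uS (big_mkcond (fun a => a \in X)) big_sumType /=.
rewrite (bigD1 k) //= big1 ?addr0; last first.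
  by move=> i /negbTE ik; rewrite /evec eq_sym ik; case: ifP.
rewrite (bigD1 k) //= big1 ?addr0; last first.
  by move=> i /negbTE ik; rewrite /evec eq_sym ik; case: ifP; rewrite ?oppr0.
by rewrite /evec eqxx; case: ifP; case: ifP => _ _; rewrite ?oppr0 ?subr0 ?sub0r.
Qed.

Lemma dot_env n (T : {set gset n}) x :
  dot (eS R T) (env x) = dot (wT T) x.
Proof.
rewrite /dot big_sumType /=.
rewrite -big_split /=; apply: eq_bigr => k _.
rewrite eS_env /env /uS /wT /=; ring.
Qed.

Lemma dot_uS n (T X : {set gset n}) :
  dot (wT T) (uS R X) = #|T :&: X|%:R - #|[set a in X | bar a \in T]|%:R.
Proof.
rewrite /dot /wT /uS -!sumr_const !(big_mkcond (fun a => a \in _)) -sumrB.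
apply: eq_bigr => a _; rewrite !inE.
by case: (a \in T); case: (a \in X); case: (bar a \in T); rewrite /= ?mulr1 ?mulr0 ?subrr ?subr0 ?sub0r.
Qed.

Lemma dot_eS n (T X : {set gset n}) :
  dot (eS R T) (eS R X) = dot (wT T) (uS R X).
Proof.
rewrite -dot_env /dot; apply: eq_bigr => k _; by rewrite (eS_env X).
Qed.

Lemma val_ge n (T X : {set gset n}) :
  (#|T|%:R <= (#|T :&: X|%:R - #|[set a in X | bar a \in T]|%:R : R)) ->
  T \subset X /\ [set a in X | bar a \in T] = set0.
Proof.
rewrite lerBrDr -natrD ler_nat => h.
have h1 : (#|T :&: X| <= #|T|)%N by rewrite subset_leq_card // subsetIl.
have h2 : #|[set a in X | bar a \in T]| = 0%N by lia.
split; last by apply/eqP; rewrite -cards_eq0 h2.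
have : T :&: X == T by rewrite eqEcard subsetIl; lia.
by move/eqP/setIidPl.
Qed.
End H.

Lemma bar_bar n (a : gset n) : bar (bar a) = a.
Proof. by case: a. Qed.

Lemma bar_inj n : injective (@bar n).
Proof. by move=> a b e; rewrite -(bar_bar a) e bar_bar. Qed.

Lemma adm_bar n (T : {set gset n}) a : admissible T -> a \in T -> bar a \in T -> False.
Proof.
move=> adm; case: a => i /= h1 h2; have := adm i; by rewrite ?h1 ?h2.
Qed.

Lemma count_adm n (S B : {set gset n}) : admissible B ->
  (#|S :&: B| + #|[set a in B | bar a \in S]| <= #|S|)%N.
Proof.
move=> adm.
have -> : #|[set a in B | bar a \in S]| = #|[set bar a | a in [set a in B | bar a \in S]]|.
  by rewrite card_imset //; apply: bar_inj.
set A := S :&: B; set C := [set bar a | a in _].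
have AC : A :&: C = set0.
  apply/setP => a; rewrite !inE; apply/negP => /andP[/andP[aS aB]] /imsetP[b].
  rewrite inE => /andP[bB bS] e; apply: (adm_bar adm aB); by rewrite e bar_bar.
have sub : A :|: C \subset S.
  apply/subsetP => a; rewrite !inE => /orP[/andP[]//|/imsetP[b]].
  by rewrite inE => /andP[_ ?] ->.
by rewrite -cardsUI AC cards0 addn0 subset_leq_card.
Qed.

Lemma cover n (B : {set gset n}) a : admissible B -> #|B| = n ->
  (a \in B) || (bar a \in B).
Proof.
move=> adm cB; apply/negPn/negP; rewrite negb_or => /andP[h1 h2].
pose f (b : gset n) : 'I_n := match b with inl i => i | inr i => i end.
have inj : {in B &, injective f}.
  move=> [i|i] [j|j] /= iB jB e; subst j => //; exfalso; exact: (adm_bar adm iB).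
have k0 : f a \notin f @: B.
  apply/imsetP => -[b bB e].
  case: a h1 h2 e {inj} => i; case: b bB => j /= bB h1 h2 e; subst j.
  - by rewrite bB in h1.
  - by rewrite bB in h2.
  - by rewrite bB in h2.
  - by rewrite bB in h1.
have : (#|f @: B| <= #|[set~ f a]|)%N.
  apply: subset_leq_card; apply/subsetP => i iB; rewrite !inE.
  by apply/eqP => e; rewrite -e iB in k0.
have := ltn_ord (f a); rewrite card_in_imset // cardsC1 card_ord cB; lia.
Qed.


Lemma augment (T : finType) (Bs : {set {set T}}) (S B1 B2 : {set T}) :
  is_matroid Bs -> B1 \in Bs -> S \subset B1 -> B2 \in Bs ->
  exists2 B, B \in Bs & S \subset B /\ B \subset S :|: B2.
Proof.
move=> [_ ex] + + B2B.
have [k Hk] : exists k, (#|B1 :\: (S :|: B2)| <= k)%N by exists #|B1 :\: (S :|: B2)|.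
elim: k B1 Hk => [|k IH] B1 Hk B1B SB1.
  exists B1 => //; split => //.
  by move: Hk; rewrite leqn0 cards_eq0 setD_eq0.
case: (boolP (B1 \subset S :|: B2)) => [h|]; first by exists B1.
rewrite -setD_eq0 -cards_eq0 -lt0n.
case/card_gt0P => x; rewrite !inE negb_or => /andP[/andP[xS xB2] xB1].
have xD : x \in B1 :\: B2 by rewrite inE xB2 xB1.
have [y] := ex B1 B2 B1B B2B x xD.
rewrite inE => /andP[yB1 yB2] B'B.
apply: (IH _ _ B'B); last first.
  apply/subsetP => z zS; rewrite !inE (subsetP SB1) // andbT.
  by apply/orP; right; apply/eqP => e; rewrite -e zS in xS.
have sub : (y |: (B1 :\ x)) :\: (S :|: B2) \subset (B1 :\: (S :|: B2)) :\ x.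
  apply/subsetP => z; rewrite !inE negb_or => /andP[/andP[zS zB2]].
  case/orP => [/eqP e|/andP[-> ->]]; first by rewrite e yB2 in zB2.
  by rewrite zS zB2.
have := subset_leq_card sub.
have e := cardsD1 x (B1 :\: (S :|: B2)); rewrite !inE negb_or xB1 xS xB2 /= in e.
move: Hk e; lia.
Qed.

Lemma lemV (R : realType) n (F Bs : {set {set gset n}}) T :
  enveloping R Bs F -> T \in F -> admissible T ->
  exists2 B, B \in Bs & T \subset B /\ [set a in B | bar a \in T] = set0.
Proof.
move=> en TF adm.
have [_ h] := en (eS R T).
case: (h (conv_pt _ TF)) => x [xP xe].
have [B BB le] := conv_max (wT R T) xP.
exists B => //; apply: val_ge; rewrite -dot_uS; apply: le_trans le.
have -> : dot (wT R T) x = dot (wT R T) (uS R T).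
  by rewrite -dot_env -dot_eS /dot; apply: eq_bigr => k _; rewrite xe.
rewrite dot_uS.
have -> : [set a in T | bar a \in T] = set0.
  by apply/setP => a; rewrite !inE; apply/negP => /andP[h1 h2]; exact: (adm_bar adm h1 h2).
by rewrite (setIidPl (subxx T)) cards0 subr0.
Qed.

Lemma card_sub (T : finType) (S X : {set T}) : (#|S| <= #|S :&: X|)%N -> S \subset X.
Proof. by move=> h; apply/setIidPl/eqP; rewrite eqEcard subsetIl h. Qed.

Lemma step (R : realType) n (F Bs : {set {set gset n}}) S B :
  is_delta_matroid R F -> is_matroid Bs -> enveloping R Bs F -> admissible S ->
  B \in Bs -> S \subset B ->
  (exists2 BD, BD \in F & S \subset BD) \/
  (exists2 B', B' \in Bs & S \subset B' /\
     (#|[set a in B' | bar a \in S]| < #|[set a in B | bar a \in S]|)%N).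
Proof.
move=> [_ dmF _] mat en adm BB SB.
have [h _] := en (eS R B).
have yP : PD F (eS R B).
  by apply: h; exists (uS R B); split; [exact: conv_pt | move=> i; rewrite eS_env].
have [BD BDF le] := conv_max (eS R S) yP.
rewrite !dot_eS !dot_uS (setIidPl SB) in le.
have [admD cD] := dmF BD BDF.
have cnt := count_adm S admD.
have le' : (#|S| + #|[set a in BD | bar a \in S]| <= #|S :&: BD| + #|[set a in B | bar a \in S]|)%N.
  by rewrite -(ler_nat R) !natrD; lra.
case: (posnP #|[set a in B | bar a \in S]|) => [z0|zpos].
  left; exists BD => //; apply: card_sub; lia.
right.
have [B'' B''B [BDB'' Z0]] := lemV en BDF admD.
have [B' B'B [SB' B'sub]] := augment mat BB SB B''B.
exists B' => //; split => //.
apply: (@leq_ltn_trans #|[set a in BD | bar a \in S]|); last by lia.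
apply: subset_leq_card; apply/subsetP => a; rewrite !inE => /andP[aB' baS].
rewrite baS andbT.
have := subsetP B'sub a aB'; rewrite inE => /orP[aS|aB''].
  by exfalso; exact: (adm_bar adm aS baS).
have := cover a admD cD; case/orP => // baBD.
have : a \in [set a in B'' | bar a \in BD] by rewrite inE aB'' baBD.
by rewrite Z0 inE.
Qed.

Theorem proposition3p12 (R : realType) (n : nat)
    (F : {set {set gset n}}) (Bs : {set {set gset n}}) (S : {set gset n}) :
  is_delta_matroid R F ->
  is_matroid Bs ->
  enveloping R Bs F ->
  admissible S ->
  (indep_matroid Bs S <-> indep_delta F S).
Proof.
move=> dm mat en adm; split.
  case=> B0 B0B SB0; split => //.
  have [k hk] : exists k, (#|[set a in B0 | bar a \in S]| <= k)%N by eexists.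
  elim: k B0 hk B0B SB0 => [|k IH] B hk BB SB.
    case: (step dm mat en adm BB SB) => // -[B' _ [_]]; lia.
  case: (step dm mat en adm BB SB) => // -[B' B'B [SB' lt]].
  apply: (IH B') => //; lia.
case=> _ [B BF SB].
have [admB _] := (let: And3 _ h _ := dm in h) B BF.
have [B'' B''B [BB'' _]] := lemV en BF admB.
by exists B'' => //; apply: subset_trans BB''.
Qed.
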